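(* Every global protocol that is implementable under $\mathtt{bag}$ is implementable under $\mathtt{p2p}$, and every global protocol that is implementable under $\mathtt{p2p}$ is implementable under $\mathtt{sb}$.
   Context: Alphabets. $\mathcal{P}$ participants, $\mathcal{V}$ message values. $\Gamma=\{p\to q:m\mid p,q\in\mathcal{P},m\in\mathcal{V}\}$. $\Sigma=\Sigma_!\cup\Sigma_?$ with $\mathsf{snd}(p,q,m)$ ($p$ sends $m$ to $q$) and $\mathsf{rcv}(p,q,m)$ ($q$ receives $m$ from $p$); $\Sigma_p$ = sends by $p$ and receives by $p$. $w\Downarrow_\Delta$ deletes letters outside $\Delta$; $\le$ prefix order, $\mathrm{pref}$ finite prefixes. $\mathrm{split}:\Gamma^\infty\to\Sigma^\infty$, $p\to q:m\mapsto\mathsf{snd}(p,q,m)\mathsf{rcv}(p,q,m)$. $w\equiv w'$ iff equal projections onto every $\Sigma_p$; $[W]_\equiv$ closure under $\equiv$. Network architectures. Channels $C$, $\xi:\mathcal{P}\times\mathcal{P}\to C$, buffers with contents $B$, empty $b_0$, partial $\mathit{insert}(\mu),\mathit{remove}(\mu)$ for $\mu\in\mathcal{P}\times\mathcal{P}\times\mathcal{V}$. Channel states map channels to contents, initially all $b_0$ ($\chi_0$); $\mathsf{snd}(p,q,m)$ inserts $(p,q,m)$ into channel $\xi(p,q)$, $\mathsf{rcv}(p,q,m)$ removes it from $\xi(p,q)$. A word is channel-compliant if all operations are defined (infinite words: all finite prefixes); $\mathcal{L}(\mathbb{A})$ is the set of such words. FIFO buffers: sequences, insert appends, $\mathit{remove}(\mu)$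 defined iff $\mu$ is at the head and then removes it. Bag buffers: finite multisets, insert adds a copy, $\mathit{remove}(\mu)$ defined iff $\mu$ present, removes a copy. $\mathtt{p2p}$: FIFO, $\xi(p,q)=(p,q)$. $\mathtt{sb}$: FIFO, $C=\mathcal{P}$, $\xi(p,q)=p$. $\mathtt{bag}$: bag buffers, single channel. CLTS over $\mathbb{A}$: family of deterministic LTSs $T_p$ over $\Sigma_p$; a send moves the sender and inserts into the channel, a receive moves the receiver and removes from the channel (must be defined). Final configuration: all local states final and channels empty ($\chi_0$). Language: traces of finite runs ending in final configurations plus traces of infinite runs. Deadlock-free: every reachable non-final configuration has an outgoing transition. Global protocol: LTS $\mathcal{S}=(S,\Gamma,T,s_0,F)$ that is sink-final (final states have no outgoing transitions), has sender-driven choice (all outgoing transitions of a state share their sender and have pairwise distinct labels), and is deadlock-free (every reachable state is final or has an outgoing transition); $\mathcal{L}(\mathcal{S})$ is its set of maximal traces (finite ending in $F$, or infinite). Semantics: $\mathcal{L}_{\mathbb{A}}(\mathcal{S})=([\Sigma^*\cap\mathrm{split}(\mathcal{L}(\mathcal{S}))]_\equiv\cap\mathcal{L}(\mathbb{A}))\cup\{w\in\Sigma^\omega\mid\forall\text{ finite }u\le w.\ u\in\mathrm{pref}([\mathrm{split}(\mathcal{L}(\mathcal{S}))]_\equiv\cap\mathcal{L}(\mathbb{A}))\}$. $\mathcal{S}$ is implementable under $\mathbb{A}$ if there is a deadlock-free CLTS over $\mathbb{A}$ whose language equals $\mathcal{L}_{\mathbb{A}}(\mathcal{S})$. *)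

(* Defs.v *)
From mathcomp Require Import all_boot.
Set Implicit Arguments. Unset Strict Implicit. Unset Printing Implicit Defensive.

Inductive word (A : Type) : Type :=
| Fin of seq A
| Inf of (nat -> A).
Arguments Fin {A} _.
Arguments Inf {A} _.

Definition isFin (A : Type) (w : word A) : bool :=
  if w is Fin _ then true else false.

Definition wnth (A : Type) (w : word A) (i : nat) : option A :=
  match w with Fin s => onth s i | Inf f => Some (f i) end.

(* the k-th letter of the projection w⇓D is a *)
Definition proj_at (A : Type) (D : pred A) (w : word A) (k : nat) (a : A) : Prop :=
  exists i, [/\ wnth w i = Some a, D a &
     count (fun j => oapp D false (wnth w j)) (iota 0 i) = k].

Definition same_proj (A : Type) (D : pred A) (w w' : word A) : Prop :=
  forall k a, proj_at D w k a <-> proj_at D w' k a.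

Definition prefix_of (A : Type) (u : seq A) (w : word A) : Prop :=
  forall i, i < size u -> wnth w i = onth u i.

Definition pref (A : Type) (L : word A -> Prop) (u : seq A) : Prop :=
  exists w, L w /\ prefix_of u w.

Section Protocols.
Variables (P : finType) (V : eqType).

(* Gamma : p -> q : m  is represented by the triple (p, q, m) *)
Definition gletter := (P * P * V)%type.

Inductive event : Type :=
| Snd of P & P & V   (* snd(p,q,m): p sends m to q *)
| Rcv of P & P & V.  (* rcv(p,q,m): q receives m from p *)

Definition active (e : event) : P :=
  match e with Snd p _ _ => p | Rcv _ q _ => q end.

Definition Sigma_p (p : P) : pred event := fun e => active e == p.

Definition sequiv (w w' : word event) : Prop :=
  forall p : P, same_proj (Sigma_p p) w w'.

Definition eclosure (W : word event -> Prop) (w : word event) : Prop :=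
  exists w', W w' /\ sequiv w' w.

Definition snd_of (g : gletter) : event := Snd g.1.1 g.1.2 g.2.
Definition rcv_of (g : gletter) : event := Rcv g.1.1 g.1.2 g.2.

Definition split (w : word gletter) : word event :=
  match w with
  | Fin s => Fin (flatten (map (fun g => [:: snd_of g; rcv_of g]) s))
  | Inf f => Inf (fun i => if odd i then rcv_of (f i./2) else snd_of (f i./2))
  end.

Record arch : Type := Arch {
  chan : eqType;
  xi : P -> P -> chan;
  buf : Type;
  b0 : buf;
  ins : gletter -> buf -> option buf;
  rmv : gletter -> buf -> option buf
}.

Definition chstate (A : arch) := chan A -> buf A.
Definition chi0 (A : arch) : chstate A := fun _ => b0 A.

Definition upd (A : arch) (chi : chstate A) (c : chan A) (b : buf A) : chstate A :=
  fun c' => if c' == c then b else chi c'.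

Definition chstep (A : arch) (chi : chstate A) (e : event) : option (chstate A) :=
  match e with
  | Snd p q m => omap (upd chi (xi A p q)) (ins (p, q, m) (chi (xi A p q)))
  | Rcv p q m => omap (upd chi (xi A p q)) (rmv (p, q, m) (chi (xi A p q)))
  end.

Definition run_ch (A : arch) (s : seq event) : option (chstate A) :=
  foldl (fun o e => obind (fun chi => chstep chi e) o) (Some (@chi0 A)) s.

Definition inLA (A : arch) (w : word event) : Prop :=
  match w with
  | Fin s => isSome (run_ch A s)
  | Inf f => forall n, isSome (run_ch A (mkseq f n))
  end.

Definition fifo_ins (mu : gletter) (b : seq gletter) : option (seq gletter) :=
  Some (rcons b mu).
Definition fifo_rmv (mu : gletter) (b : seq gletter) : option (seq gletter) :=
  match b with x :: b' => if x == mu then Some b' else None | [::] => None end.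

(* bag buffers: finite multisets, represented by their multiplicity function *)
Definition bag_ins (mu : gletter) (b : gletter -> nat) : option (gletter -> nat) :=
  Some (fun x => b x + (x == mu)).
Definition bag_rmv (mu : gletter) (b : gletter -> nat) : option (gletter -> nat) :=
  if 0 < b mu then Some (fun x => b x - (x == mu)) else None.

Definition p2p : arch :=
  @Arch (prod P P) (fun p q => (p, q)) (seq gletter) [::] fifo_ins fifo_rmv.
Definition sb : arch :=
  @Arch P (fun p q => p) (seq gletter) [::] fifo_ins fifo_rmv.
Definition bag : arch :=
  @Arch unit (fun _ _ => tt) (gletter -> nat) (fun _ => 0) bag_ins bag_rmv.

(* T_p is deterministic over Sigma_p: only ldelta p q e with active e = p is used *)
Record clts : Type := CLTS {
  lstate : P -> Type;
  linit : forall p, lstate p;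
  lfinal : forall p, lstate p -> bool;
  ldelta : forall p, lstate p -> event -> option (lstate p)
}.

Section CLTSsem.
Variables (A : arch) (C : clts).

Definition config := ((forall p, lstate C p) * chstate A)%type.

Definition cinit : config := (linit C, @chi0 A).
Definition cfinal (c : config) : Prop :=
  (forall p, lfinal (c.1 p)) /\ c.2 = @chi0 A.

Definition cstep (c : config) (e : event) (c' : config) : Prop :=
  [/\ ldelta (c.1 (active e)) e = Some (c'.1 (active e)),
      (forall r, r != active e -> c'.1 r = c.1 r) &
      chstep c.2 e = Some c'.2].

Inductive creach : config -> seq event -> config -> Prop :=
| CR0 c : creach c [::] c
| CRS c e c' s c'' : cstep c e c' -> creach c' s c'' -> creach c (e :: s) c''.

Definition clang (w : word event) : Prop :=
  match w with
  | Fin s => exists c, creach cinit s c /\ cfinal c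
  | Inf f => exists cs : nat -> config,
      cs 0 = cinit /\ forall i, cstep (cs i) (f i) (cs i.+1)
  end.

Definition cdeadlock_free : Prop :=
  forall s c, creach cinit s c -> ~ cfinal c -> exists e c', cstep c e c'.
End CLTSsem.

Record glts : Type := GLTS {
  gstate : Type;
  gtrans : gstate -> gletter -> gstate -> Prop;
  ginit : gstate;
  gfinal : gstate -> Prop
}.

Section Global.
Variable G : glts.

Inductive greach : gstate G -> seq gletter -> gstate G -> Prop :=
| GR0 s : greach s [::] s
| GRS s a s' t s'' : gtrans s a s' -> greach s' t s'' -> greach s (a :: t) s''.

Definition sink_final : Prop :=
  forall s : gstate G, gfinal s -> forall a s', ~ gtrans s a s'.

Definition sender_driven : Prop :=
  forall (s : gstate G) a1 s1 a2 s2, gtrans s a1 s1 -> gtrans s a2 s2 ->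
    a1.1.1 = a2.1.1 /\ (a1 = a2 -> s1 = s2).

Definition gdeadlock_free : Prop :=
  forall t (s : gstate G), greach (ginit G) t s -> gfinal s \/ exists a s', gtrans s a s'.

Definition global_protocol : Prop :=
  [/\ sink_final, sender_driven & gdeadlock_free].

Definition glang (w : word gletter) : Prop :=
  match w with
  | Fin t => exists s, greach (ginit G) t s /\ gfinal s
  | Inf f => exists ss : nat -> gstate G,
      ss 0 = ginit G /\ forall i, gtrans (ss i) (f i) (ss i.+1)
  end.

Definition split_lang (w : word event) : Prop :=
  exists g, glang g /\ split g = w.

Definition semL (A : arch) (w : word event) : Prop :=
  (eclosure (fun u => isFin u /\ split_lang u) w /\ inLA A w)
  \/ (~~ isFin w /\
      forall u, prefix_of u w ->
        pref (fun v => eclosure split_lang v /\ inLA A v) u).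

Definition implementable (A : arch) : Prop :=
  exists C : clts, cdeadlock_free A C /\ forall w, clang A C w <-> semL A w.
End Global.
End Protocols.

(* Main.v *)
Require Import Defs.
From mathcomp Require Import all_boot.
From Stdlib Require Import FunctionalExtensionality Classical IndefiniteDescription.
Set Implicit Arguments. Unset Strict Implicit. Unset Printing Implicit Defensive.

Section S.
Variables (P : finType) (V : eqType).
Notation event := (event P V).
Notation gletter := (gletter P V).

Definition runf (A : arch P V) (c : chstate A) (s : seq event) :=
  foldl (fun o e => obind (fun chi => chstep chi e) o) (Some c) s.

Lemma foldl_none (A : arch P V) s :
  foldl (fun o e => obind (fun chi => @chstep _ _ A chi e) o) None s = None.
Proof. by elim: s. Qed.

Lemma runf_cons A (c : chstate A) e s :
  runf c (e :: s) = obind (fun c' => runf c' s) (chstep c e).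
Proof. rewrite /runf /=; case: (chstep c e) => //= ; exact: foldl_none. Qed.

Lemma runf_cat A (c : chstate A) s1 s2 :
  runf c (s1 ++ s2) = obind (fun c' => runf c' s2) (runf c s1).
Proof.
rewrite /runf foldl_cat; case: (foldl _ _ s1) => //=; exact: foldl_none.
Qed.

Lemma runf_rcons A (c : chstate A) s e :
  runf c (rcons s e) = obind (fun c' => chstep c' e) (runf c s).
Proof. by rewrite /runf foldl_rcons. Qed.

Lemma runf_catS A (c : chstate A) s1 s2 :
  isSome (runf c (s1 ++ s2)) -> exists c', runf c s1 = Some c'.
Proof. rewrite runf_cat; case: (runf c s1) => //= c' _; by exists c'. Qed.

Lemma run_chE A s : run_ch A s = runf (@chi0 _ _ A) s.
Proof. by []. Qed.

Definition ech (A : arch P V) (e : event) : chan A :=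
  match e with Snd p q _ => xi A p q | Rcv p q _ => xi A p q end.
Definition emu (e : event) : gletter :=
  match e with Snd p q m => (p, q, m) | Rcv p q m => (p, q, m) end.
Definition eop (A : arch P V) (e : event) :=
  match e with Snd _ _ _ => @ins _ _ A | Rcv _ _ _ => @rmv _ _ A end.

Arguments ech A e : clear implicits.
Arguments eop A e : clear implicits.

Lemma chstepE A (c : chstate A) e :
  chstep c e = omap (upd c (ech A e)) (eop A e (emu e) (c (ech A e))).
Proof. by case: e. Qed.

Lemma updE (A : arch P V) (c : chstate A) ch b ch' : upd c ch b ch' = if ch' == ch then b else c ch'.
Proof. by []. Qed.

Lemma upd_upd (A : arch P V) (c : chstate A) ch b1 b2 : upd (upd c ch b1) ch b2 = upd c ch b2.
Proof. apply: functional_extensionality => x; rewrite !updE; by case: eqP. Qed.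

Lemma upd_comm (A : arch P V) (c : chstate A) ch1 ch2 b1 b2 : ch1 != ch2 ->
  upd (upd c ch1 b1) ch2 b2 = upd (upd c ch2 b2) ch1 b1.
Proof.
move=> H; apply: functional_extensionality => x; rewrite !updE.
case: (eqVneq x ch1) => [->|//]; by rewrite (negbTE H).
Qed.

Lemma upd_id (A : arch P V) (c : chstate A) ch : upd c ch (c ch) = c.
Proof. apply: functional_extensionality => x; rewrite updE; by case: eqP => [->|]. Qed.

Lemma chstep_upd_other (A : arch P V) (c : chstate A) ch B e : ech A e != ch ->
  chstep (upd c ch B) e = omap (fun c' => upd c' ch B) (chstep c e).
Proof.
move=> H; rewrite !chstepE updE (negbTE H).
case: (eop _ _ _ _) => //= b; by rewrite upd_comm // eq_sym.
Qed.

End S.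

Section F.
Variables (P : finType) (V : eqType).
Notation event := (event P V).
Notation gletter := (gletter P V).

Definition pre (T : Type) (a b : seq T) := exists z, b = a ++ z.

Lemma catI (T : Type) (a x y : seq T) : a ++ x = a ++ y -> x = y.
Proof. by elim: a => //= z a IH [] /IH. Qed.

Definition splits (t : seq gletter) : seq event :=
  flatten (map (fun g => [:: snd_of g; rcv_of g]) t).

Variables (C : eqType) (x : P -> P -> C).
Hypothesis Hxi : forall p q p' q', x p' q' = x p q -> p' = p.

Definition fifo : arch P V :=
  @Arch P V C x (seq gletter) [::] (@fifo_ins P V) (@fifo_rmv P V).

Notation c0 := (@chi0 _ _ fifo).

Lemma run_splits t : runf c0 (splits t) = Some c0.
Proof.
elim: t => // g t IH; rewrite /splits /= -/(splits t).
rewrite runf_cons /= runf_cons /= updE eqxx /= eqxx /= upd_upd.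
have -> : upd c0 (x g.1.1 g.1.2) [::] = c0 by apply: upd_id.
exact: IH.
Qed.

Lemma chstep_other (c c' : chstate fifo) y :
  chstep c y = Some c' -> exists b0, c' = upd c (ech fifo y) b0.
Proof. rewrite chstepE; case: (eop _ _ _) => //= b0 [<-]; by exists b0. Qed.

Lemma ML_snd p q m : forall r1 (c d : chstate fifo),
  all (fun y => active y != p) r1 -> runf c r1 = Some d ->
  runf (upd c (x p q) (rcons (c (x p q)) (p, q, m))) r1 =
    Some (upd d (x p q) (rcons (d (x p q)) (p, q, m))).
Proof.
elim=> [|y r IH] c d /=; first by move=> _ [->].
case/andP=> Hy Hr; rewrite !runf_cons.
case E: (chstep c y) => [c'|//] /= Hrun.
case: (eqVneq (ech fifo y) (x p q)) => Hch; last first.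
  have [b0 Hc'] := chstep_other E.
  rewrite chstep_upd_other // E /=.
  have -> : c (x p q) = c' (x p q) by rewrite Hc' updE eq_sym (negbTE Hch).
  exact: IH.
move: Hy E Hch Hrun; case: y => p' q' m' /= Hy E Hch Hrun.
  by move: Hy; rewrite (Hxi Hch) eqxx.
move: E; rewrite Hch; case E2: (c (x p q)) => [|z b] //=.
case: eqP => // Hz [Hc'].
rewrite updE eqxx /= Hz eqxx /= upd_upd.
have := IH _ _ Hr Hrun.
by rewrite -Hc' updE eqxx upd_upd.
Qed.

Lemma ML_rcv p q m : forall r1 (c d : chstate fifo) b,
  all (fun y => active y != q) r1 -> c (x p q) = (p, q, m) :: b ->
  runf c r1 = Some d ->
  exists b', d (x p q) = (p, q, m) :: b' /\
    runf (upd c (x p q) b) r1 = Some (upd d (x p q) b').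
Proof.
elim=> [|y r IH] c d b /=.
  by move=> _ Hc [<-]; exists b.
case/andP=> Hy Hr Hc; rewrite !runf_cons.
case E: (chstep c y) => [c'|//] /= Hrun.
case: (eqVneq (ech fifo y) (x p q)) => Hch; last first.
  have [b0 Hc'] := chstep_other E.
  rewrite chstep_upd_other // E /=.
  have Hc2 : c' (x p q) = (p, q, m) :: b by rewrite Hc' updE eq_sym (negbTE Hch).
  have [b' [Hd Hr']] := IH _ _ _ Hr Hc2 Hrun.
  by exists b'; split.
move: Hy E Hch Hrun; case: y => p' q' m' /= Hy E Hch Hrun.
  move: E; rewrite Hch Hc /= => -[Hc'].
  rewrite updE eqxx upd_upd.
  have Hc2 : c' (x p q) = (p, q, m) :: rcons b (p', q', m') by rewrite -Hc' updE eqxx.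
  have [b' [Hd Hr']] := IH _ _ _ Hr Hc2 Hrun.
  exists b'; split => //; by rewrite -Hc' upd_upd in Hr'.
move: E; rewrite Hch Hc /=; case: eqP => // [[_ Hq _]].
by move: Hy; rewrite Hq eqxx.
Qed.

Lemma ML (e : event) r1 (c d ce de : chstate fifo) :
  chstep c e = Some ce -> runf c r1 = Some d -> chstep d e = Some de ->
  all (fun y => active y != active e) r1 -> runf ce r1 = Some de.
Proof.
case: e => p q m /=.
  by move=> [<-] Hr [<-] Ha; apply: ML_snd.
case E: (c (x p q)) => [|z b] //=; case: eqP => // Hz [<-] Hr Hd Ha; rewrite Hz in E.
have [b' [Hd' Hr']] := ML_rcv Ha E Hr.
by move: Hd; rewrite Hd' /= eqxx => -[<-].
Qed.

Lemma decomp (D : pred event) r e z : filter D r = e :: z ->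
  exists r1 r2, r = r1 ++ e :: r2 /\ all (fun y => ~~ D y) r1.
Proof.
elim: r => //= y r IH; case: ifP => Hy.
  by case=> <- _; exists [::], r.
move/IH=> [r1 [r2 [-> Ha]]]; exists (y :: r1), r2; by rewrite /= Hy.
Qed.

Lemma filter_nil (T : Type) (D : pred T) s : all (fun y => ~~ D y) s -> filter D s = [::].
Proof. by elim: s => //= y s IH /andP[/negbTE -> /IH]. Qed.

Definition Sig (p : P) : pred event := Sigma_p p.

Lemma FC t : forall u, isSome (runf c0 u) ->
  (forall p, pre (filter (Sig p) u) (filter (Sig p) (splits t))) ->
  exists r, runf c0 (u ++ r) = Some c0 /\
    forall p, filter (Sig p) (u ++ r) = filter (Sig p) (splits t).
Proof.
elim/last_ind => [|u0 e IH].
  by move=> _ _; exists (splits t); split => //; apply: run_splits.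
rewrite runf_rcons; case E0: (runf c0 u0) => [c|//] /=.
case Ee: (chstep c e) => [ce|//] _ Hpre.
have Hpre0 : forall p, pre (filter (Sig p) u0) (filter (Sig p) (splits t)).
  move=> p; have [z Hz] := Hpre p; move: Hz; rewrite filter_rcons.
  case: ifP => _ Hz; last by exists z.
  by exists (e :: z); rewrite Hz cat_rcons.
have [r0 [Hr0 Hf0]] : exists r0, runf c0 (u0 ++ r0) = Some c0 /\ forall p, filter (Sig p) (u0 ++ r0) = filter (Sig p) (splits t) by apply: IH => //; rewrite E0.
set a := active e.
have [z Hz] := Hpre a.
move: Hz; rewrite -Hf0 filter_rcons filter_cat.
have Hae : Sig a e by rewrite /Sig /Sigma_p eqxx.
rewrite Hae cat_rcons => /catI Hz.
have [r1 [r2 [Hr Ha]]] := decomp Hz.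
exists (r1 ++ r2); split.
  rewrite runf_cat runf_rcons E0 /= Ee /= runf_cat.
  move: Hr0; rewrite Hr runf_cat E0 /= runf_cat.
  case E1: (runf c r1) => [d|//] /=; rewrite runf_cons.
  case E2: (chstep d e) => [de|//] /= Hde.
  have -> : runf ce r1 = Some de.
    apply: (ML Ee E1 E2); apply: sub_all Ha => y /=.
    by rewrite /Sig /Sigma_p.
  exact: Hde.
move=> p; rewrite -Hf0 Hr cat_rcons !filter_cat /= filter_cat /=.
case: ifP => Hp //.
have Hpa : p = a by move: Hp; rewrite /Sig /Sigma_p => /eqP.
rewrite Hpa (filter_nil Ha) //.
Qed.

End F.

Section W.
Variable T : Type.
Implicit Types (w : word T) (s : seq T).

Definition wtake n w : seq T := match w with Fin s => take n s | Inf f => mkseq f n end.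
Definition wdrop n w : word T :=
  match w with Fin s => Fin (drop n s) | Inf f => Inf (fun i => f (n + i)) end.
Definition wapp s w : word T :=
  match w with
  | Fin s' => Fin (s ++ s')
  | Inf f => Inf (fun i => if i < size s then nth (f 0) s i else f (i - size s))
  end.
Definition optl (o : option T) : seq T := if o is Some a then [:: a] else [::].

Lemma take_onth n s : take n.+1 s = take n s ++ optl (onth s n).
Proof.
elim: s n => [|a s IH] [|n] //=; first by rewrite take0.
by rewrite IH.
Qed.

Lemma wtakeS n w : wtake n.+1 w = wtake n w ++ optl (wnth w n).
Proof. case: w => [s|f] /=; first exact: take_onth. by rewrite mkseqS cats1. Qed.

Lemma mkseqD (f : nat -> T) m n : mkseq f (m + n) = mkseq f m ++ mkseq (fun i => f (m + i)) n.
Proof.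
rewrite /mkseq iotaD map_cat add0n; congr (_ ++ _).
by rewrite -{1}(addn0 m) iotaDl -map_comp.
Qed.

Lemma wtake_add m n w : wtake (m + n) w = wtake m w ++ wtake n (wdrop m w).
Proof. case: w => [s|f] /=; [exact: takeD | exact: mkseqD]. Qed.

Lemma pre_refl (s : seq T) : pre s s. Proof. by exists [::]; rewrite cats0. Qed.
Lemma pre_trans (a b c : seq T) : pre a b -> pre b c -> pre a c.
Proof. by move=> [z1 ->] [z2 ->]; exists (z1 ++ z2); rewrite catA. Qed.
Lemma pre_cat (a z : seq T) : pre a (a ++ z). Proof. by exists z. Qed.
Lemma pre_filter (D : pred T) (a b : seq T) : pre a b -> pre (filter D a) (filter D b).
Proof. by move=> [z ->]; rewrite filter_cat; exists (filter D z). Qed.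

Lemma wtake_pre m n w : m <= n -> pre (wtake m w) (wtake n w).
Proof. move=> H; rewrite -(subnKC H) wtake_add; exact: pre_cat. Qed.

Lemma onth_pre (a b : seq T) k x : pre a b -> onth a k = Some x -> onth b k = Some x.
Proof.
move=> [z ->] H; rewrite onth_cat.
have : (k < size a) by rewrite -onthTE H.
by move=> ->.
Qed.

Lemma wtake_of_prefix u w : prefix_of u w -> wtake (size u) w = u.
Proof.
move=> H; suff : forall n, n <= size u -> wtake n w = take n u.
  by move/(_ (size u) (leqnn _)); rewrite take_size.
elim=> [|n IH] Hn; first by case: w {H} => [s|f] /=; rewrite ?take0.
rewrite wtakeS take_onth IH ?(ltnW Hn) //; by rewrite H.
Qed.

Lemma onth_Some_nth (x0 : T) s i : i < size s -> onth s i = Some (nth x0 s i).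
Proof. by move=> H; rewrite onthE (nth_map x0). Qed.

Lemma prefix_wapp u r w : prefix_of u (wapp (u ++ r) w).
Proof.
move=> i Hi; have Hi' : i < size (u ++ r) by rewrite size_cat ltn_addr.
case: w => [s|f] /=.
  by rewrite onth_cat Hi' onth_cat Hi.
by rewrite Hi' -(onth_Some_nth _ Hi') onth_cat Hi.
Qed.

Lemma wtake_wapp s n w : wtake (size s + n) (wapp s w) = s ++ wtake n w.
Proof.
case: w => [s'|f] /=.
  by rewrite takeD take_size_cat // drop_size_cat.
rewrite mkseqD; congr (_ ++ _).
  transitivity (mkseq (nth (f 0) s) (size s)); last exact: mkseq_nth.
  rewrite /mkseq; apply/eq_in_map => i.
  by rewrite mem_iota add0n => /andP[_ ->].
by apply: eq_mkseq => i /=; rewrite ltnNge leq_addr /= addKn.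
Qed.

Lemma count_wtake (D : pred T) w i :
  count (fun j => oapp D false (wnth w j)) (iota 0 i) = count D (wtake i w).
Proof.
elim: i => [|i IH]; first by case: w => [s|f] /=; rewrite ?take0.
rewrite -addn1 iotaD count_cat IH addn1 wtakeS count_cat /= add0n.
by case: (wnth w i) => /=.
Qed.

Lemma PA1 (D : pred T) w k a : proj_at D w k a -> exists n, onth (filter D (wtake n w)) k = Some a.
Proof.
move=> [i [H1 H2 H3]]; exists i.+1.
rewrite wtakeS H1 filter_cat /= H2 onth_cat size_filter -count_wtake H3 ltnn subnn //.
Qed.

Lemma PA2 (D : pred T) w k a n : onth (filter D (wtake n w)) k = Some a -> proj_at D w k a.
Proof.
elim: n => [|n IH]; first by case: w => [s|f] /=; rewrite ?take0 // onth0n.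
rewrite wtakeS filter_cat onth_cat; case: ifP => [_|Hk]; first exact: IH.
case E: (wnth w n) => [x|] /=; last by rewrite onth0n.
case: ifP => Hx /=; last by rewrite onth0n.
move/onth1P => [Hk0 <-]; exists n; split => //.
rewrite count_wtake -size_filter; apply/eqP; rewrite eqn_leq leqNgt Hk /=.
by rewrite -subn_eq0 Hk0.
Qed.

Lemma SPC (D : pred T) w w' :
  (forall n, exists n', pre (filter D (wtake n w)) (filter D (wtake n' w'))) ->
  forall k a, proj_at D w k a -> proj_at D w' k a.
Proof.
move=> H k a /PA1 [n Hn]; have [n' Hn'] := H n.
apply: (@PA2 _ _ _ _ n'); exact: onth_pre Hn' Hn.
Qed.

Lemma SPC_inv (D : pred T) w w' :
  (forall k a, proj_at D w k a -> proj_at D w' k a) ->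
  forall n, exists n', pre (filter D (wtake n w)) (filter D (wtake n' w')).
Proof.
move=> H; elim=> [|n [n' IH]].
  exists 0; have -> : wtake 0 w = [::] by case: w {H} => [s|f] /=; rewrite ?take0.
  by exists (filter D (wtake 0 w')).
rewrite wtakeS filter_cat.
case E: (wnth w n) => [x|] /=; last by exists n'; rewrite cats0.
case: ifP => Hx /=; last by exists n'; rewrite cats0.
have Hp : proj_at D w (size (filter D (wtake n w))) x.
  apply: (@PA2 _ _ _ _ n.+1); rewrite wtakeS E filter_cat /= Hx onth_cat ltnn subnn //.
have [n'' Hn''] := PA1 (H _ _ Hp).
exists (maxn n' n'').
have Hpre1 : pre (filter D (wtake n' w')) (filter D (wtake (maxn n' n'') w')).
  apply: pre_filter; apply: wtake_pre; exact: leq_maxl.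
have Hpre2 : pre (filter D (wtake n'' w')) (filter D (wtake (maxn n' n'') w')).
  apply: pre_filter; apply: wtake_pre; exact: leq_maxr.
have [z Hz] := pre_trans IH Hpre1.
have := onth_pre Hpre2 Hn''; rewrite Hz onth_cat ltnn subnn.
have := onth_pre Hpre2 Hn''; rewrite Hz onth_cat ltnn subnn => _.
by case: z {Hz} => // y z /= [->]; exists z; rewrite -catA.
Qed.

End W.

Section K.
Variables (P : finType) (V : eqType).
Notation event := (event P V).
Notation gletter := (gletter P V).

Lemma splits_cat (a b : seq gletter) : splits (a ++ b) = splits a ++ splits b.
Proof. by rewrite /splits map_cat flatten_cat. Qed.

Lemma wtake_split K (g : word gletter) : wtake (K.*2) (Defs.split g) = splits (wtake K g).
Proof.
case: g => [s|f] /=.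
  elim: s K => [|a s IH] [|K] //=; by rewrite IH.
elim: K => [|K IH] //.
rewrite doubleS -addn2 mkseqD IH (mkseqS f K) -cats1 splits_cat; congr (_ ++ _).
rewrite /mkseq /= !addn0 odd_double doubleK addn1 /=.
by rewrite odd_double /= uphalf_double.
Qed.

Lemma isFin_split (g : word gletter) : isFin (Defs.split g) = isFin g.
Proof. by case: g. Qed.

Lemma uniformN (Q : P -> nat -> Prop) :
  (forall p n m, n <= m -> Q p n -> Q p m) -> (forall p, exists n, Q p n) ->
  exists N, forall p, Q p N.
Proof.
move=> Hm H.
suff [N HN] : exists N, forall p, p \in enum P -> Q p N.
  by exists N => p; apply: HN; rewrite mem_enum.
elim: (enum P) => [|p l [N IH]]; first by exists 0.
have [n Hn] := H p; exists (maxn N n) => q; rewrite inE => /orP [/eqP ->|Hq].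
  exact: Hm (leq_maxr _ _) Hn.
exact: Hm (leq_maxl _ _) (IH _ Hq).
Qed.

Variables (C : eqType) (x : P -> P -> C).
Hypothesis Hxi : forall p q p' q', x p' q' = x p q -> p' = p.
Notation A := (fifo V x).
Notation c0 := (@chi0 _ _ A).

Lemma inLA_wtake (w : word event) : (forall n, isSome (run_ch A (wtake n w))) -> inLA A w.
Proof. case: w => [s|f] /= H; last exact: H. by have := H (size s); rewrite take_size. Qed.

Lemma run_pre (a b : seq event) : pre a b -> isSome (runf c0 b) -> isSome (runf c0 a).
Proof. move=> [z ->] /runf_catS [c' ->] //. Qed.

Lemma KL (g : word gletter) (v : word event) (u : seq event) :
  sequiv (Defs.split g) v -> prefix_of u v -> isSome (run_ch A u) ->
  exists v', sequiv (Defs.split g) v' /\ prefix_of u v' /\ inLA A v' /\ isFin v' = isFin g.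
Proof.
move=> Heq Hpu Hru.
have Hu := wtake_of_prefix Hpu.
have [N HN] : exists N, forall p,
    pre (filter (Sig p) (wtake (size u) v)) (filter (Sig p) (wtake N (Defs.split g))).
  apply: (uniformN (Q := fun p N => pre (filter (Sig p) (wtake (size u) v))
                                         (filter (Sig p) (wtake N (Defs.split g))))).
    move=> p n m Hnm H; apply: pre_trans H _; apply: pre_filter; exact: wtake_pre.
  move=> p; apply: SPC_inv => k a; exact: (proj2 (Heq p k a)).
rewrite Hu in HN.
set t := wtake N g.
have HNt : forall p, pre (filter (Sig p) u) (filter (Sig p) (splits t)).
  move=> p; apply: pre_trans (HN p) _; apply: pre_filter.
  rewrite /t -wtake_split; apply: wtake_pre; by rewrite -addnn leq_addr.
have [r [Hr Hf]] := FC Hxi Hru HNt.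
have Hf' : forall p, filter (Sigma_p p) u ++ filter (Sigma_p p) r = filter (Sigma_p p) (splits t).
  by move=> p; rewrite -filter_cat; exact: Hf.
set s := u ++ r.
set W := wdrop (N.*2) (Defs.split g).
have HsW : forall n, wtake (N.*2 + n) (Defs.split g) = splits t ++ wtake n W.
  by move=> n; rewrite wtake_add wtake_split.
exists (wapp s W); split; [|split; [|split]].
- move=> p k a; split; apply: SPC.
    move=> n; exists (size s + n); rewrite wtake_wapp.
    apply: pre_trans (pre_filter _ (wtake_pre _ (leq_addl (N.*2) n))) _.
    by rewrite HsW !filter_cat /s Hf'; apply: pre_refl.
  move=> n; exists (N.*2 + n).
  apply: pre_trans (pre_filter _ (wtake_pre _ (leq_addl (size s) n))) _.
  by rewrite wtake_wapp HsW !filter_cat /s Hf'; apply: pre_refl.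
- exact: prefix_wapp.
- apply: inLA_wtake => n; rewrite run_chE.
  apply: run_pre (wtake_pre _ (leq_addl (size s) n)) _.
  rewrite wtake_wapp runf_cat Hr /=.
  have : isSome (runf c0 (splits t ++ wtake n W)).
    rewrite -HsW; apply: run_pre (wtake_pre _ (_ : N.*2 + n <= (N + n).*2)) _.
      by rewrite doubleD leq_add2l -addnn leq_addr.
    by rewrite wtake_split run_splits.
  by rewrite runf_cat run_splits.
- rewrite /W; clear; by case: g => [s'|f].
Qed.

End K.

Section CL.
Variables (P : finType) (V : eqType).
Notation event := (event P V).
Notation gletter := (gletter P V).

Section OneArch.
Variables (A : arch P V) (C : clts P V).

Lemma creach_cons (c c'' : config A C) e s :
  creach c (e :: s) c'' -> exists c', cstep c e c' /\ creach c' s c''.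
Proof. move=> H; inversion H; subst; eauto. Qed.

Lemma creach_nil (c c' : config A C) : creach c [::] c' -> c = c'.
Proof. by move=> H; inversion H. Qed.

Lemma creach_cat (c c'' : config A C) s1 s2 :
  creach c (s1 ++ s2) c'' <-> exists c', creach c s1 c' /\ creach c' s2 c''.
Proof.
elim: s1 c => [|e s1 IH] c /=.
  split; [by move=> H; exists c; split => //; constructor|].
  by move=> [c' [/creach_nil -> H]].
split.
  move/creach_cons => [c1 [H1 /IH [c' [H2 H3]]]]; exists c'; split => //.
  exact: CRS H1 H2.
move=> [c' [/creach_cons [c1 [H1 H2]] H3]]; apply: CRS H1 _; apply/IH; by exists c'.
Qed.

Lemma creach_rcons (c c' c'' : config A C) s e :
  creach c s c' -> cstep c' e c'' -> creach c (rcons s e) c''.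
Proof.
move=> H1 H2; rewrite -cats1; apply/creach_cat; exists c'; split => //.
apply: CRS H2 _; constructor.
Qed.

Lemma cstep_det (c c1 c2 : config A C) e : cstep c e c1 -> cstep c e c2 -> c1 = c2.
Proof.
case: c1 => l1 ch1; case: c2 => l2 ch2 /= [H1 H2 H3] [K1 K2 K3].
have -> : ch1 = ch2 by move: H3; rewrite K3 => -[].
have -> // : l1 = l2.
apply: functional_extensionality_dep => r.
case: (eqVneq r (active e)) => [->|Hr].
  by move: H1; rewrite K1 => -[].
by have := H2 r Hr; have := K2 r Hr; rewrite /= => -> ->.
Qed.

Lemma creach_det (c c1 c2 : config A C) s : creach c s c1 -> creach c s c2 -> c1 = c2.
Proof.
move=> H; elim: H c2 => [c0 c2 /creach_nil //|c0 e c' s' c'' Hs Hr IH c2].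
move/creach_cons => [c1' [Hs' Hr']].
rewrite (cstep_det Hs Hs') in IH; exact: IH.
Qed.

Lemma creach_run (c c' : config A C) s : creach c s c' -> runf c.2 s = Some c'.2.
Proof.
elim=> [//|c0 e c1 s' c'' [_ _ H3] _ IH].
by rewrite runf_cons H3.
Qed.

Lemma prefix_clang w u : clang A C w -> prefix_of u w -> exists c, creach (cinit A C) u c.
Proof.
move=> Hw /wtake_of_prefix Hu; case: w Hw Hu => [s|f] /=.
  move=> [c [Hr _]] Hu.
  move: Hr; rewrite -(cat_take_drop (size u) s) Hu => /creach_cat [c' [H _]].
  by exists c'.
move=> [cs [H0 Hs]] <-; exists (cs (size u)).
elim: (size u) => [|n IH]; first by rewrite H0; constructor.
rewrite mkseqS; exact: creach_rcons IH (Hs n).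
Qed.

Lemma creach_seq (c0 c : config A C) s : creach c0 s c ->
  exists cs : nat -> config A C, [/\ cs 0 = c0, cs (size s) = c &
     forall i e, onth s i = Some e -> cstep (cs i) e (cs i.+1)].
Proof.
elim=> [c1|c1 e c1' s' c'' Hs _ [cs [H0 H1 H2]]].
  by exists (fun _ => c1); split => // i e; rewrite onth0n.
exists (fun i => if i is i'.+1 then cs i' else c1); split => //=.
move=> [|i] e' /=; first by move=> [<-]; rewrite H0.
exact: H2.
Qed.

Lemma EXT : cdeadlock_free A C -> forall s c, creach (cinit A C) s c ->
  exists w, clang A C w /\ prefix_of s w.
Proof.
move=> Hdf s c Hsc.
case: (classic (exists t c', creach c t c' /\ cfinal c')) => [[t [c' [Hr Hf]]]|Hno].
  exists (Fin (s ++ t)); split.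
    exists c'; split => //; apply/creach_cat; by exists c.
  by move=> i Hi /=; rewrite onth_cat Hi.
pose Q d := exists t, creach c t d.
have Hstep : forall d : {d | Q d}, exists y : event * {d | Q d},
    cstep (sval d) y.1 (sval y.2).
  move=> [d [t Ht]] /=.
  have Hnf : ~ cfinal d by move=> Hf; apply: Hno; exists t, d.
  have Hr : creach (cinit A C) (s ++ t) d by apply/creach_cat; exists c.
  have [e [d' Hd']] := Hdf _ _ Hr Hnf.
  have Qd' : Q d' by exists (rcons t e); exact: creach_rcons Ht Hd'.
  by exists (e, exist _ d' Qd').
pose nxt d := proj1_sig (constructive_indefinite_description _ (Hstep d)).
have Hnxt : forall d, cstep (sval d) (nxt d).1 (sval (nxt d).2).
  move=> d; exact: proj2_sig (constructive_indefinite_description _ (Hstep d)).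
have Qc : Q c by exists [::]; constructor.
pose ds n := iter n (fun d => (nxt d).2) (exist _ c Qc).
pose f n := (nxt (ds n)).1.
have [cs' [H0 H1 H2]] := creach_seq Hsc.
exists (wapp s (Inf f)); split; last first.
  by have := @prefix_wapp _ s [::] (Inf f); rewrite cats0.
exists (fun i => if i < size s then cs' i else sval (ds (i - size s))); split.
  case: ifP => // /negbT; rewrite -leqNgt leqn0 => /eqP Hs.
  by rewrite Hs /= -H0 -H1 Hs.
move=> i; case: ifP => Hi.
  have H2' := H2 i _ (onth_Some_nth (f 0) Hi).
  case: ifP => Hi1; first exact: H2'.
  have Hi2 : i.+1 = size s by apply/eqP; rewrite eqn_leq Hi leqNgt Hi1.
  by rewrite Hi2 subnn /= -H1 -Hi2.
have Hi1 : (i.+1 < size s) = false by apply: negbTE; rewrite -leqNgt; apply: leqW; rewrite leqNgt Hi.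
rewrite Hi1 subSn; last by rewrite leqNgt Hi.
exact: Hnxt.
Qed.

End OneArch.
End CL.

Section T.
Variables (P : finType) (V : eqType).
Notation event := (event P V).
Notation gletter := (gletter P V).
Variables (A1 A2 : arch P V) (F : chstate A2 -> chstate A1) (inv : chstate A2 -> Prop).
Hypothesis HF : forall c e c', inv c -> chstep c e = Some c' ->
  inv c' /\ chstep (F c) e = Some (F c').
Hypothesis Hinv0 : inv (@chi0 _ _ A2).
Hypothesis HF0 : F (@chi0 _ _ A2) = @chi0 _ _ A1.
Hypothesis HF0' : forall c, inv c -> F c = @chi0 _ _ A1 -> c = @chi0 _ _ A2.
Hypothesis HKL : forall (g : word gletter) (v : word event) (u : seq event),
  sequiv (Defs.split g) v -> prefix_of u v -> isSome (run_ch A2 u) ->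
  exists v', sequiv (Defs.split g) v' /\ prefix_of u v' /\ inLA A2 v' /\ isFin v' = isFin g.

Lemma R1 s : forall c c', inv c -> runf c s = Some c' -> inv c' /\ runf (F c) s = Some (F c').
Proof.
elim: s => [|e s IH] c c' Hc /=; first by case=> <-.
rewrite !runf_cons; case E: (chstep c e) => [c1|//] /= H.
have [Hi1 HF1] := HF Hc E; rewrite HF1 /=; exact: IH.
Qed.

Lemma R2 w : inLA A2 w -> inLA A1 w.
Proof.
case: w => [s|f] /=.
  rewrite !run_chE; case E: (runf _ s) => [c|//] _.
  by have [_] := R1 Hinv0 E; rewrite HF0 => ->.
move=> H n; move: (H n); rewrite !run_chE; case E: (runf _ _) => [c|//] _.
by have [_] := R1 Hinv0 E; rewrite HF0 => ->.
Qed.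

Lemma prefix_inLA (A : arch P V) u v : prefix_of u v -> inLA A v -> isSome (run_ch A u).
Proof.
move/wtake_of_prefix; case: v => [s|f] /= <-; last exact.
rewrite !run_chE -{1}(cat_take_drop (size u) s); move/runf_catS => [c ->] //.
Qed.

Variable G : glts P V.
Section WithC.
Variable C : clts P V.

Lemma C1 (c c' : config A2 C) s : creach c s c' -> inv c.2 ->
  creach (c.1, F c.2) s (c'.1, F c'.2) /\ inv c'.2.
Proof.
elim=> [c0 H|c0 e c1 s' c'' [H1 H2 H3] _ IH Hc]; first by split => //; constructor.
have [Hi HFc] := HF Hc H3.
have [IH1 IH2] := IH Hi; split => //.
apply: CRS IH1; split => //.
Qed.

Lemma C2 (c c' : config A1 C) s : creach c s c' -> forall c2, inv c2 -> c.2 = F c2 ->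
  isSome (runf c2 s) -> exists c2', [/\ creach (c.1, c2) s (c'.1, c2'), c'.2 = F c2' & inv c2'].
Proof.
elim=> [c0 c2 Hi H _|c0 e c1 s' c'' [H1 H2 H3] _ IH c2 Hi Hc].
  by exists c2; split => //; constructor.
rewrite runf_cons; case E: (chstep c2 e) => [c2m|//] /= Hs.
have [Him HFm] := HF Hi E.
have Hc1 : c1.2 = F c2m by move: H3; rewrite Hc HFm => -[].
have [c2' [K1 K2 K3]] := IH _ Him Hc1 Hs.
exists c2'; split => //; apply: CRS K1; split => //.
Qed.

Lemma CL w : clang A2 C w <-> clang A1 C w /\ inLA A2 w.
Proof.
case: w => [s|f] /=.
  split.
    move=> [c [Hr [Hf1 Hf2]]].
    have [H1 _] := C1 Hr Hinv0.
    split; last by rewrite run_chE (creach_run Hr).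
    exists (c.1, F c.2); split; first by move: H1; rewrite /= HF0.
    by split => //=; rewrite Hf2 HF0.
  move=> [[c [Hr [Hf1 Hf2]]] Hrun].
  have [c2' [K1 K2 K3]] := C2 Hr Hinv0 (esym HF0) Hrun.
  exists (c.1, c2'); split => //; split => //=.
  by apply: HF0' => //; rewrite -K2.
split.
  move=> [cs [H0 Hs]].
  have Hinv : forall i, inv (cs i).2.
    elim=> [|i IH]; first by rewrite H0.
    by case: (Hs i) => _ _ /(HF IH) [].
  split.
    exists (fun i => ((cs i).1, F (cs i).2)); split; first by rewrite H0 /= HF0.
    move=> i; case: (Hs i) => K1 K2 K3; split => //=.
    by case: (HF (Hinv i) K3).
  move=> n; suff -> : run_ch A2 (mkseq f n) = Some (cs n).2 by [].
  elim: n => [|n IH]; first by rewrite H0.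
  by rewrite run_chE mkseqS runf_rcons -run_chE IH /=; case: (Hs n).
move=> [[cs [H0 Hs]] Hrun].
pose c2 n := odflt (@chi0 _ _ A2) (run_ch A2 (mkseq f n)).
have Hc2 : forall n, run_ch A2 (mkseq f n) = Some (c2 n).
  by move=> n; move: (Hrun n); rewrite /c2; case: (run_ch _ _).
have Hst : forall n, chstep (c2 n) (f n) = Some (c2 n.+1).
  by move=> n; have := Hc2 n.+1; rewrite run_chE mkseqS runf_rcons -run_chE Hc2.
have Hinv : forall n, (cs n).2 = F (c2 n) /\ inv (c2 n).
  elim=> [|n [IH1 IH2]].
    have -> : c2 0 = @chi0 _ _ A2 by [].
    by rewrite H0 HF0.
  have [Hi HFn] := HF IH2 (Hst n).
  split => //; case: (Hs n) => _ _; by rewrite IH1 HFn => -[].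
exists (fun n => ((cs n).1, c2 n)); split; first by rewrite H0.
move=> n; case: (Hs n) => K1 K2 K3; split => //; exact: Hst.
Qed.

Lemma SL w : semL G A2 w <-> semL G A1 w /\ inLA A2 w.
Proof.
split.
  case=> [[H1 H2]|[Hnf H]].
    by split => //; left; split => //; apply: R2.
  split.
    right; split => // u Hu; have [v [[Hv1 Hv2] Hv3]] := H u Hu.
    by exists v; split => //; split => //; apply: R2.
  case: w Hnf H => [//|f] _ H n.
  have Hp : prefix_of (mkseq f n) (Inf f).
    move=> i Hi /=; rewrite size_mkseq in Hi.
    by rewrite (onth_Some_nth (f 0)) ?size_mkseq // nth_mkseq.
  have [v [[_ Hv] Hpv]] := H _ Hp.
  exact: (prefix_inLA Hpv Hv).
case=> [[[H1 H2]|[Hnf H]] HA2].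
  by left.
right; split => // u Hu.
have [v [[[w' [[g [Hg Hsg]] Hsq]] HA1] Hpv]] := H u Hu.
rewrite -Hsg in Hsq.
have [v' [K1 [K2 [K3 K4]]]] := HKL Hsq Hpv (prefix_inLA Hu HA2).
exists v'; split => //; split => //.
by exists (Defs.split g); split => //; exists g.
Qed.

Lemma isFin_split' (g : word gletter) : isFin (Defs.split g) = isFin g.
Proof. by case: g. Qed.

Lemma DF : cdeadlock_free A1 C -> (forall w, clang A1 C w <-> semL G A1 w) ->
  cdeadlock_free A2 C.
Proof.
move=> Hdf Hl s c Hr Hnf.
have [Hr1 Hic] := C1 Hr Hinv0; rewrite /= HF0 in Hr1.
have Hnf1 : ~ cfinal (c.1, F c.2).
  move=> [Hf1 /= Hf2]; apply: Hnf; split => //; exact: HF0'.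
have [w [Hw Hpw]] := EXT Hdf Hr1.
have [v [[[w' [[g [Hg Hsg]] Hsq]] HA1] Hpv]] :
    pref (fun v => eclosure (split_lang G) v /\ inLA A1 v) s.
  case: (proj1 (Hl w) Hw) => [[[w' [[_ Hsl] Hsq]] HA]|[_ H]]; last exact: H.
  by exists w; split => //; split => //; exists w'.
rewrite -Hsg in Hsq.
have Hrun2 : run_ch A2 s = Some c.2 by rewrite run_chE (creach_run Hr).
have Hrs : isSome (run_ch A2 s) by rewrite Hrun2.
have [v' [K1 [K2 [K3 K4]]]] := HKL Hsq Hpv Hrs.
have Hv' : clang A1 C v'.
  apply/Hl; case: v' K1 K2 K3 K4 => [s'|f] K1 K2 K3 K4.
    left; split; last exact: R2.
    by exists (Defs.split g); split => //; split; [rewrite isFin_split' -K4 | exists g].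
  right; split => // u Hu; exists (Inf f); split => //; split; last exact: R2.
  by exists (Defs.split g); split => //; exists g.
case E: (wnth v' (size s)) => [e|].
  have Hpe : prefix_of (rcons s e) v'.
    move=> i; rewrite size_rcons ltnS -cats1 onth_cat leq_eqVlt.
    case/orP => [/eqP ->|Hi]; first by rewrite ltnn subnn.
    by rewrite Hi K2.
  have [c' Hc'] := prefix_clang Hv' Hpe.
  move: Hc'; rewrite -cats1 => /creach_cat [c'' [Hc'' /creach_cons [c3 [Hst _]]]].
  rewrite -(creach_det Hr1 Hc'') in Hst.
  have := prefix_inLA Hpe K3; rewrite run_chE runf_rcons -run_chE Hrun2 /=.
  case E2: (chstep c.2 e) => [c2'|//] _.
  exists e, (c3.1, c2'); case: Hst => S1 S2 S3; split => //.
case: v' E K1 K2 K3 K4 Hv' => [s'|f] //= E K1 K2 K3 K4 Hv'.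
have Hs' : s' = s.
  have := wtake_of_prefix K2; rewrite /= => Ht.
  by rewrite -Ht take_oversize // -onthNE E.
move: Hv'; rewrite Hs' => -[c' [Hr' Hf']].
by exfalso; apply: Hnf1; rewrite (creach_det Hr1 Hr').
Qed.
End WithC.

Lemma TR : implementable G A1 -> implementable G A2.
Proof.
move=> [C' [Hdf Hl]]; exists C'; split; first exact: DF.
move=> w; rewrite CL SL; split; by move=> [/Hl H1 H2]; split.
Qed.

End T.

Section I.
Variables (P : finType) (V : eqType).
Notation event := (event P V).
Notation gletter := (gletter P V).

Definition Fpb (c : chstate (p2p P V)) : chstate (bag P V) :=
  fun _ x => count_mem x (c (x.1.1, x.1.2)).
Definition invp (c : chstate (p2p P V)) : Prop :=
  forall pq (x : gletter), x \in c pq -> (x.1.1, x.1.2) = pq.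

Lemma HFpb c e c' : invp c -> chstep c e = Some c' -> invp c' /\ chstep (Fpb c) e = Some (Fpb c').
Proof.
move=> Hi; case: e => p q m /=.
  move=> [<-]; split.
    move=> pq y; rewrite updE; case: eqP => [->|_]; last exact: Hi.
    by rewrite mem_rcons inE => /orP [/eqP -> //|/Hi].
  congr Some; apply: functional_extensionality => u; apply: functional_extensionality => y.
  rewrite /Fpb !updE /=.
  case: ((y.1.1, y.1.2) =P (p, q)) => [Hy|Hy].
    by rewrite -Hy -cats1 count_cat /= addn0; congr (_ + _); rewrite eq_sym.
  suff -> : (y == (p, q, m)) = false by rewrite addn0.
  by apply/eqP => Hy'; apply: Hy; rewrite Hy'.
case E: (c (p, q)) => [|z b] //=; case: eqP => // Hz [<-].
split.
  move=> pq y; rewrite updE; case: eqP => [->|_]; last exact: Hi.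
  by move=> Hyb; apply: (Hi (p, q)); rewrite E inE Hyb orbT.
rewrite /Fpb /bag_rmv /= E /= Hz eqxx add1n /=.
congr Some; apply: functional_extensionality => u; apply: functional_extensionality => y.
rewrite !updE /=.
case: ((y.1.1, y.1.2) =P (p, q)) => [Hy|Hy].
  by rewrite Hy E /= Hz [(p, q, m) == y]eq_sym; case: (y == (p, q, m)); rewrite /= ?add1n ?add0n ?subn0 ?subn1.
suff -> : (y == (p, q, m)) = false by rewrite subn0.
by apply/eqP => Hy'; apply: Hy; rewrite Hy'.
Qed.

Lemma HF0pb : Fpb (@chi0 _ _ (p2p P V)) = @chi0 _ _ (bag P V).
Proof. by apply: functional_extensionality => u; apply: functional_extensionality. Qed.

Lemma HF0pb' c : invp c -> Fpb c = @chi0 _ _ (bag P V) -> c = @chi0 _ _ (p2p P V).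
Proof.
move=> Hi H; apply: functional_extensionality => pq.
case E: (c pq) => [|y b] //.
have Hy := Hi pq y; rewrite E inE eqxx /= in Hy; have {}Hy := Hy isT.
have := f_equal (fun h => h tt y) H; rewrite /Fpb /= Hy E /= eqxx //.
Qed.

Definition Fsp (c : chstate (sb P V)) : chstate (p2p P V) :=
  fun pq => filter (fun x : gletter => x.1.2 == pq.2) (c pq.1).
Definition invs (c : chstate (sb P V)) : Prop :=
  forall p (x : gletter), x \in c p -> x.1.1 = p.

Lemma HFsp c e c' : invs c -> chstep c e = Some c' -> invs c' /\ chstep (Fsp c) e = Some (Fsp c').
Proof.
move=> Hi; case: e => p q m /=.
  move=> [<-]; split.
    move=> p' y; rewrite updE; case: eqP => [->|_]; last exact: Hi.
    by rewrite mem_rcons inE => /orP [/eqP -> //|/Hi].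
  congr Some; apply: functional_extensionality => [[p' q']].
  rewrite /Fsp !updE /=.
  case: (eqVneq p' p) => [->|Hp].
    rewrite filter_rcons /=; case: (eqVneq q' q) => [->|Hq]; first by rewrite !eqxx.
    by rewrite xpair_eqE eqxx (negbTE Hq).
  by rewrite xpair_eqE (negbTE Hp).
case E: (c p) => [|z b] //=; case: eqP => // Hz [<-].
split.
  move=> p' y; rewrite updE; case: eqP => [->|_]; last exact: Hi.
  by move=> Hyb; apply: (Hi p); rewrite E inE Hyb orbT.
rewrite /Fsp /= E /= Hz /= eqxx /= eqxx.
congr Some; apply: functional_extensionality => [[p' q']].
rewrite !updE /=.
case: (eqVneq p' p) => [->|Hp].
  case: (eqVneq q' q) => [->|Hq]; first by rewrite eqxx.
  rewrite -[(p, q') == (p, q)]/(_ && _) eqxx /= (negbTE Hq) E /= Hz /=.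
  by rewrite eq_sym (negbTE Hq).
by rewrite xpair_eqE (negbTE Hp).
Qed.

Lemma HF0sp : Fsp (@chi0 _ _ (sb P V)) = @chi0 _ _ (p2p P V).
Proof. by apply: functional_extensionality. Qed.

Lemma HF0sp' c : invs c -> Fsp c = @chi0 _ _ (p2p P V) -> c = @chi0 _ _ (sb P V).
Proof.
move=> Hi H; apply: functional_extensionality => p.
case E: (c p) => [|y b] //.
have Hy := Hi p y; rewrite E inE eqxx /= in Hy; have {}Hy := Hy isT.
have := f_equal (fun h => h (p, y.1.2)) H; rewrite /Fsp /= E /= eqxx //.
Qed.

Lemma Hxi_p2p (p q p' q' : P) : (p', q') = (p, q) -> p' = p.
Proof. by case. Qed.
Lemma Hxi_sb (p q p' q' : P) : (fun a b : P => a) p' q' = (fun a b : P => a) p q -> p' = p.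
Proof. by []. Qed.

Lemma KL_p2p (g : word gletter) (v : word event) (u : seq event) :
  sequiv (Defs.split g) v -> prefix_of u v -> isSome (run_ch (p2p P V) u) ->
  exists v', sequiv (Defs.split g) v' /\ prefix_of u v' /\ inLA (p2p P V) v' /\ isFin v' = isFin g.
Proof. exact: (@KL P V _ (fun p q => (p, q)) Hxi_p2p g v u). Qed.

Lemma KL_sb (g : word gletter) (v : word event) (u : seq event) :
  sequiv (Defs.split g) v -> prefix_of u v -> isSome (run_ch (sb P V) u) ->
  exists v', sequiv (Defs.split g) v' /\ prefix_of u v' /\ inLA (sb P V) v' /\ isFin v' = isFin g.
Proof. exact: (@KL P V _ (fun p q => p) Hxi_sb g v u). Qed.

End I.

Theorem lemma7p9 (P : finType) (V : eqType) (G : glts P V) :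
  global_protocol G ->
  (implementable G (bag P V) -> implementable G (p2p P V)) /\
  (implementable G (p2p P V) -> implementable G (sb P V)).
Proof.
move=> _; split.
  apply: (TR (F := @Fpb P V) (inv := @invp P V)).
  - exact: HFpb.
  - by move=> pq x.
  - exact: HF0pb.
  - exact: HF0pb'.
  - exact: KL_p2p.
apply: (TR (F := @Fsp P V) (inv := @invs P V)).
- exact: HFsp.
- by move=> p x.
- exact: HF0sp.
- exact: HF0sp'.
- exact: KL_sb.
Qed.
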